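(* Assume $R_\phi(\mathbf{w})$ has a unique minimizer $\mathbf{w}_{\mathrm{sup}}$ and that $\phi$ is decreasing, i.e. $\phi(a)\ge\phi(b)$ whenever $a\le b$. Then there is no $\mathbf{w}_{\mathrm{semi}}\in\mathbb{R}^d$ that satisfies both of the following: (i) $\max_{\mathbf{q}\in\{0,1\}^U} D_\phi(\mathbf{w}_{\mathrm{semi}},\mathbf{q})\le 0$; (ii) there exists $\mathbf{q}^\ast\in\{0,1\}^U$ with $D_\phi(\mathbf{w}_{\mathrm{semi}},\mathbf{q}^\ast)<0$.
   Context: Fix integers $L,U,d\ge 1$. Let $\mathbf{X}\in\mathbb{R}^{L\times d}$ be a matrix whose rows $\mathbf{x}_1^\top,\dots,\mathbf{x}_L^\top$ are the labeled objects, with labels $\mathbf{y}\in\{-1,+1\}^L$. Let $\mathbf{X}_{\mathrm{u}}\in\mathbb{R}^{U\times d}$ be a matrix whose rows $\mathbf{x}_{\mathrm{u},1}^\top,\dots,\mathbf{x}_{\mathrm{u},U}^\top$ are the unlabeled objects. Let $\phi:\mathbb{R}\to\mathbb{R}$ be a loss function, $\Omega:\mathbb{R}^d\to\mathbb{R}$ a convex function and $\lambda\ge 0$. The supervised risk is $R_\phi(\mathbf{w})=\sum_{i=1}^L\phi(y_i\mathbf{x}_i^\top\mathbf{w})+\lambda\Omega(\mathbf{w})$. For responsibilities $\mathbf{q}\in[0,1]^U$ the semi-supervised risk is $R^{\mathrm{semi}}_\phi(\mathbf{w},\mathbf{q})=R_\phi(\mathbf{w})+\sum_{j=1}^U\big[q_j\phi(\mathbf{x}_{\mathrm{u},j}^\top\mathbf{w})+(1-q_j)\phi(-\mathbf{x}_{\mathrm{u},j}^\top\mathbf{w})\big]$.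 Given the minimizer $\mathbf{w}_{\mathrm{sup}}$ of $R_\phi$, define $D_\phi(\mathbf{w},\mathbf{q})=R^{\mathrm{semi}}_\phi(\mathbf{w},\mathbf{q})-R^{\mathrm{semi}}_\phi(\mathbf{w}_{\mathrm{sup}},\mathbf{q})$. *)

(* Defs.v *)
From HB Require Import structures.
From mathcomp Require Import all_boot all_order all_algebra.
Set Implicit Arguments. Unset Strict Implicit. Unset Printing Implicit Defensive.
Import Order.TTheory GRing.Theory Num.Theory.
Local Open Scope ring_scope.

Definition convex_fun (R : realFieldType) (d : nat) (Omega : 'cV[R]_d -> R) : Prop :=
  forall (u v : 'cV[R]_d) (t : R), 0 <= t -> t <= 1 ->
    Omega (t *: u + (1 - t) *: v) <= t * Omega u + (1 - t) * Omega v.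

(* Supervised risk R_phi(w) = sum_i phi(y_i x_i^T w) + lambda Omega(w);
   x_i^T w is the i-th entry of X w. *)
Definition sup_risk (R : realFieldType) (L d : nat) (phi : R -> R)
  (Omega : 'cV[R]_d -> R) (lam : R) (X : 'M[R]_(L, d)) (y : 'I_L -> R)
  (w : 'cV[R]_d) : R :=
  \sum_(i < L) phi (y i * (X *m w) i 0) + lam * Omega w.

Definition semi_risk (R : realFieldType) (L U d : nat) (phi : R -> R)
  (Omega : 'cV[R]_d -> R) (lam : R) (X : 'M[R]_(L, d)) (y : 'I_L -> R)
  (Xu : 'M[R]_(U, d)) (w : 'cV[R]_d) (q : 'I_U -> R) : R :=
  sup_risk phi Omega lam X y w
  + \sum_(j < U) (q j * phi ((Xu *m w) j 0) + (1 - q j) * phi (- (Xu *m w) j 0)).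

Definition Dphi (R : realFieldType) (L U d : nat) (phi : R -> R)
  (Omega : 'cV[R]_d -> R) (lam : R) (X : 'M[R]_(L, d)) (y : 'I_L -> R)
  (Xu : 'M[R]_(U, d)) (wsup w : 'cV[R]_d) (q : 'I_U -> R) : R :=
  semi_risk phi Omega lam X y Xu w q - semi_risk phi Omega lam X y Xu wsup q.

Definition binary_resp (R : realFieldType) (U : nat) (q : 'I_U -> R) : Prop :=
  forall j, q j = 0 \/ q j = 1.

(* Main.v *)
Require Import Defs.
From HB Require Import structures.
From mathcomp Require Import all_boot all_order all_algebra.
Import Order.TTheory GRing.Theory Num.Theory.
Local Open Scope ring_scope.

Theorem theorem1 (R : realFieldType) (L U d : nat)
  (hL : (1 <= L)%N) (hU : (1 <= U)%N) (hd : (1 <= d)%N)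
  (X : 'M[R]_(L, d)) (y : 'I_L -> R) (hy : forall i, y i = 1 \/ y i = -1)
  (Xu : 'M[R]_(U, d)) (phi : R -> R) (Omega : 'cV[R]_d -> R)
  (hOmega : convex_fun Omega) (lam : R) (hlam : 0 <= lam)
  (wsup : 'cV[R]_d)
  (hmin : forall w, sup_risk phi Omega lam X y wsup <= sup_risk phi Omega lam X y w)
  (huniq : forall w', (forall w, sup_risk phi Omega lam X y w' <= sup_risk phi Omega lam X y w) ->
                      w' = wsup)
  (hdec : forall a b : R, a <= b -> phi b <= phi a) :
  ~ (exists wsemi : 'cV[R]_d,
       (forall q : 'I_U -> R, binary_resp q -> Dphi phi Omega lam X y Xu wsup wsemi q <= 0) /\
       (exists qs : 'I_U -> R, binary_resp qs /\ Dphi phi Omega lam X y Xu wsup wsemi qs < 0)).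
Proof.
move=> [w [h1 [qs [_ hqs]]]].
have hne : w <> wsup.
  by move=> E; move: hqs; rewrite E /Dphi subrr ltxx.
have hlt : sup_risk phi Omega lam X y wsup < sup_risk phi Omega lam X y w.
  rewrite lt_neqAle hmin andbT; apply/negP => /eqP E.
  by apply: hne; apply: huniq => w'; rewrite -E.
pose q := fun j : 'I_U => if (Xu *m w) j 0 <= (Xu *m wsup) j 0 then (1:R) else 0.
have hb : binary_resp q by move=> j; rewrite /q; case: ifP; auto.
have := h1 q hb.
rewrite /Dphi /semi_risk.
set S1 := sup_risk _ _ _ _ _ w; set S2 := sup_risk _ _ _ _ _ wsup.
set A := \sum_(j < U) _; set B := \sum_(j < U) _.
have hAB : B <= A.
  rewrite /A /B -subr_ge0 -sumrB; apply: sumr_ge0 => j _.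
  rewrite /q; case: ifP => hj.
    rewrite !subrr !mul0r !addr0 !mul1r subr_ge0; exact: hdec.
  rewrite !subr0 !mul0r !add0r !mul1r subr_ge0; apply: hdec.
  rewrite lerN2; apply: ltW; rewrite ltNge; by rewrite hj.
rewrite subr_le0 => H.
have : S2 + B < S1 + A by apply: ltr_leD.
by rewrite ltNge H.
Qed.
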